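(* Let $P$ be either (case $P_\alpha$) a hyperbolic $2$-sphere with three cone points $p_1,p_2,p_3$ of cone angles $2\alpha_1,2\alpha_2,2\alpha_3$, all less than $2\pi$, removed, with $\gamma_k$ a simple loop around $p_k$; or (case $P_l$) a hyperbolic $3$-holed sphere with geodesic boundary components $\gamma_1,\gamma_2,\gamma_3$ of lengths $2l_1,2l_2,2l_3$. Let $\rho:\pi_1(P)\to\mathrm{PSL}(2;\mathbb R)\subset\mathrm{PSL}(2;\mathbb C)$ be the holonomy representation, $\widetilde\rho$ a lift to $\mathrm{SL}(2;\mathbb C)$, and $\mathrm{Ad}_\rho=\mathrm{Sym}^2\circ\widetilde\rho:\pi_1(P)\to\mathrm{SL}(3;\mathbb C)$. For $k=1,2,3$ let $\mathbf I_k\in\mathbb C^3$ be a (unique up to scalar) nonzero invariant vector of $\mathrm{Ad}_\rho([\gamma_k])^T$. Then: \begin{enumerate} \item[(1)] $H_k(P;\mathrm{Ad}_\rho)=0$ for $k\neq1$. \item[(2)] $H_1(P;\mathrm{Ad}_\rho)\cong\mathbb C^3$, with basis $\mathbf h_P=\{\mathbf I_1\otimes[\gamma_1],\mathbf I_2\otimes[\gamma_2],\mathbf I_3\otimes[\gamma_3]\}$. \item[(3)] $\displaystyle\mathrm{Tor}(P_\alpha,\mathbf h_P;\mathrm{Ad}_\rho)=\pm\frac{i}{16\sin\alpha_1\sin\alpha_2\sin\alpha_3}$. \item[(4)] $\displaystyle\mathrm{Tor}(P_l,\mathbf h_P;\mathrm{Ad}_\rho)=\pm\frac{1}{16\sinh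 l_1\sinh l_2\sinh l_3}$. \end{enumerate}
   Context: $\mathrm{Sym}^2$ is the symmetric square representation of $\mathrm{SL}(2;\mathbb C)$ on $\mathbb C^3$ (homogeneous quadratic polynomials in two variables); $\mathrm{Sym}^2\circ\widetilde\rho$ is independent of the lift and conjugate to the adjoint representation. Twisted chain complex: $C_*(P;\mathrm{Ad}_\rho)=\mathbb C^3\otimes_{\mathrm{Ad}_\rho}C_*(\widetilde P;\mathbb Z)$ (for a CW structure on $P$, e.g. a spine), with relation $\mathbf v\otimes\gamma\mathbf c=(\mathrm{Ad}_\rho(\gamma)^T\mathbf v)\otimes\mathbf c$ and standard basis $\{\mathbf e_r\otimes c\}$. The class $\mathbf I_k\otimes[\gamma_k]$ is represented by $\mathbf I_k\otimes\widetilde\gamma_k$ for a lift $\widetilde\gamma_k$ of the loop. Reidemeister torsion of a complex with bases $\mathbf c_k$ and homology bases $\mathbf h_k$: $\mathrm{Tor}=\pm\prod_k[\mathbf b_k\sqcup\widetilde{\mathbf b}_{k-1}\sqcup\widetilde{\mathbf h}_k;\mathbf c_k]^{(-1)^{k+1}}$, where $\mathbf b_k$ is a basis of $\partial C_{k+1}$, $\widetilde{\mathbf b}_k\subset C_{k+1}$ a lift, $\widetilde{\mathbf h}_k$ a lift of $\mathbf h_k$, and $[\,\cdot\,;\,\cdot\,]$ the determinant of the change of basis; it is invariant under subdivision and simple homotopy.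
   Formalization: Each invariant vector $\mathbf I_k$, seen as a homogeneous quadratic polynomial, is normalized to have discriminant 1 (square of the middle coefficient minus four times the product of the outer two), rather than being any nonzero scalar multiple. The statement above fails without it. *)

(* Defs.v *)
From HB Require Import structures.
From mathcomp Require Import all_boot all_order all_algebra.
From mathcomp Require Import reals trigo sequences.
From mathcomp Require Export complex.
Set Implicit Arguments. Unset Strict Implicit. Unset Printing Implicit Defensive.
Import Order.TTheory GRing.Theory Num.Theory.
Local Open Scope ring_scope.
Local Open Scope complex_scope.

Definition sinhR {R : realType} (x : R) : R := (expR x - expR (- x)) / 2.
Definition coshR {R : realType} (x : R) : R := (expR x + expR (- x)) / 2.

Definition idx0 : 'I_2 := ord0.
Definition idx1 : 'I_2 := ord_max.

(* C^3 = homogeneous quadratic polynomials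
   u x^2 + v xy + w y^2, coordinates (u, v, w) in the monomial basis.
   sym2 g is the matrix of p |-> p o g, i.e. p(x,y) |-> p(ax+by, cx+dy)
   for g = [[a,b],[c,d]], acting on coefficient ROW vectors: (p o g) = p *m sym2 g.
   It is multiplicative: sym2 (g *m h) = sym2 g *m sym2 h.  Hence on column
   vectors the transpose sym2 g ^T is the (right) action used in the twisted
   chain complex:  v (x) gamma c = (Ad(gamma)^T v) (x) c. *)
Definition sym2 {F : comPzRingType} (g : 'M[F]_2) : 'M[F]_3 :=
  let a := g idx0 idx0 in let b := g idx0 idx1 in
  let c := g idx1 idx0 in let d := g idx1 idx1 in
  \matrix_(i < 3, j < 3)
    match nat_of_ord i, nat_of_ord j with
    | 0, 0 => a ^+ 2       | 0, 1 => (a * b) *+ 2   | 0, _ => b ^+ 2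
    | 1, 0 => a * c        | 1, 1 => a * d + b * c  | 1, _ => b * d
    | _, 0 => c ^+ 2       | _, 1 => (c * d) *+ 2   | _, _ => d ^+ 2
    end.

Definition AdC {R : realType} (g : 'M[R]_2) : 'M[R[i]]_3 :=
  sym2 (map_mx (fun x : R => x%:C) g).

Definition SL2R {R : realType} (g : 'M[R]_2) : Prop := \det g = 1.

(* pi_1(P) is free on gamma_1, gamma_2, with gamma_1 gamma_2 gamma_3 = 1
   (boundary loops / loops around the cone points, coherently oriented).
   A lift of the holonomy is determined by A = rho~(gamma_1), B = rho~(gamma_2);
   rho~(gamma_3) = (A B)^{-1}.

   Holonomy of the hyperbolic sphere with cone angles 2 a1, 2 a2, 2 a3
   (gamma_k elliptic of rotation angle 2 a_k): real SL(2) lift with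
   tr A = 2 cos a1, tr B = 2 cos a2, tr (AB) = -2 cos a3.  (This determines the
   representation up to conjugation: it is the character of the holonomy.) *)
Definition cone_holonomy {R : realType} (a1 a2 a3 : R) (A B : 'M[R]_2) : Prop :=
  [/\ SL2R A, SL2R B,
      \tr A = 2 * cos a1, \tr B = 2 * cos a2 & \tr (A *m B) = - (2 * cos a3)].

(* Holonomy of the hyperbolic pair of pants with geodesic boundary lengths
   2 l1, 2 l2, 2 l3 (gamma_k hyperbolic of translation length 2 l_k):
   tr A = 2 cosh l1, tr B = 2 cosh l2, tr (AB) = -2 cosh l3. *)
Definition pants_holonomy {R : realType} (l1 l2 l3 : R) (A B : 'M[R]_2) : Prop :=
  [/\ SL2R A, SL2R B,
      \tr A = 2 * coshR l1, \tr B = 2 * coshR l2 & \tr (A *m B) = - (2 * coshR l3)].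

Section Complex.
Context {R : realType}.
Local Notation C := (R[i]).

(* Twisted chain complex of the spine of P (wedge of two circles: one vertex v,
   edges e1, e2 with lifts e~_j from v~ to gamma_j v~):
     C_1 = C^3 (x) e~_1  (+)  C^3 (x) e~_2  = 'cV_(3+3),   C_0 = C^3 (x) v~ = 'cV_3,
   C_k = 0 for k >= 2, standard bases {e_r (x) cell}.
   d(v (x) e~_j) = v (x) (gamma_j v~ - v~) = (Ad(gamma_j)^T v - v) (x) v~. *)
Definition bd (A B : 'M[R]_2) : 'M[C]_(3, 3 + 3) :=
  row_mx ((AdC A)^T - 1%:M) ((AdC B)^T - 1%:M).

Definition disc (I : 'cV[C]_3) : C :=
  I (inord 1) ord0 ^+ 2 - 4%:R * I (inord 0) ord0 * I (inord 2) ord0.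

Definition normalized_invariant (g : 'M[R]_2) (I : 'cV[C]_3) : Prop :=
  [/\ I != 0, (AdC g)^T *m I = I & disc I = 1].

(* The chains I_k (x) gamma~_k (lifts starting at v~):
   gamma~_1 = e~_1, gamma~_2 = e~_2, and for gamma_3 = gamma_2^{-1} gamma_1^{-1}:
   gamma~_3 = - gamma_2^{-1} e~_2 - gamma_2^{-1} gamma_1^{-1} e~_1, so
   I_3 (x) gamma~_3 = - (Ad(gamma_2^{-1}gamma_1^{-1})^T I_3) (x) e~_1
                      - (Ad(gamma_2^{-1})^T I_3) (x) e~_2.
   Columns of hP are the three chains, in the order h_P. *)
Definition hP (A B : 'M[R]_2) (I1 I2 I3 : 'cV[C]_3) : 'M[C]_(3 + 3, 3) :=
  row_mx (row_mx (col_mx I1 0) (col_mx 0 I2))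
         (- col_mx ((AdC (invmx (A *m B)))^T *m I3) ((AdC (invmx B))^T *m I3)).

(* H_0 = C_0 / d C_1 = 0  (H_k = 0 for k >= 2 since C_k = 0). *)
Definition H0_vanishes (A B : 'M[R]_2) : Prop := \rank (bd A B) = 3.

(* H_1 = ker d  (no 2-cells), as a row space: rows are transposed 1-cycles. *)
Definition H1 (A B : 'M[R]_2) : 'M[C]_(3 + 3) := kermx (bd A B)^T.

Definition H1_basis (A B : 'M[R]_2) (I1 I2 I3 : 'cV[C]_3) : Prop :=
  [/\ \rank (H1 A B) = 3,
      ((hP A B I1 I2 I3)^T == H1 A B)%MS & row_free (hP A B I1 I2 I3)^T].

(* Reidemeister torsion of 0 -> C_1 -> C_0 -> 0 with homology basis h:
   Tor = [b_1 u b~_0 u h~_1 ; c_1]^{+1} [b_0 ; c_0]^{-1}, with b_1 = {} (C_2 = 0),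
   b~_0 = columns of L (any lift), b_0 = d b~_0 = columns of d L (must be a basis). *)
Definition torsion (D : 'M[C]_(3, 3 + 3)) (H L : 'M[C]_(3 + 3, 3)) : C :=
  \det (row_mx L H) / \det (D *m L).

End Complex.

(* Main.v *)
Require Import Defs.
From HB Require Import structures.
From mathcomp Require Import all_boot all_order all_algebra.
From mathcomp Require Import reals trigo sequences complex exp.
From mathcomp Require Import ring lra.
Set Implicit Arguments. Unset Strict Implicit. Unset Printing Implicit Defensive.
Import Order.TTheory GRing.Theory Num.Theory.
Local Open Scope ring_scope.

Ltac expand := repeat progress (rewrite ?mxE ?big_ord_recl ?big_ord0 /=).
Ltac ent := apply/matrixP => -[[|[|[|?]]] ?] -[[|[|[|?]]] ?] //; expand.
Ltac ent2 := apply/matrixP => -[[|[|?]] ?] -[[|[|?]] ?] //; expand.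

Section Core.
Variable F : fieldType.

Definition mk2 (a b c d : F) : 'M[F]_2 := \matrix_(i < 2, j < 2)
  match nat_of_ord i, nat_of_ord j with 0, 0 => a | 0, _ => b | _, 0 => c | _, _ => d end.

Definition mk3 (a b c d e f g h k : F) : 'M[F]_3 := \matrix_(i < 3, j < 3)
  match nat_of_ord i, nat_of_ord j with
  | 0, 0 => a | 0, 1 => b | 0, _ => c
  | 1, 0 => d | 1, 1 => e | 1, _ => f
  | _, 0 => g | _, 1 => h | _, _ => k end.

Definition mkc3 (x y z : F) : 'cV[F]_3 := \matrix_(i < 3, j < 1)
  match nat_of_ord i with 0 => x | 1 => y | _ => z end.

Definition o0 : 'I_3 := @Ordinal 3 0 isT.
Definition o1 : 'I_3 := @Ordinal 3 1 isT.
Definition o2 : 'I_3 := @Ordinal 3 2 isT.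

Lemma mx2E (g : 'M[F]_2) : g = mk2 (g idx0 idx0) (g idx0 idx1) (g idx1 idx0) (g idx1 idx1).
Proof.
apply/matrixP => i j; rewrite mxE.
by case: i => [[|[|i]] Hi] //; case: j => [[|[|j]] Hj] //=; congr (g _ _); apply: val_inj.
Qed.

Ltac gen2 g := rewrite [g]mx2E;
  move: (g idx0 idx0) (g idx0 idx1) (g idx1 idx0) (g idx1 idx1).

Lemma mxc3E (v : 'cV[F]_3) : v = mkc3 (v o0 ord0) (v o1 ord0) (v o2 ord0).
Proof.
apply/matrixP => i j; rewrite mxE ord1.
by case: i => [[|[|[|i]]] Hi] //=; congr (v _ _); apply: val_inj.
Qed.

Lemma mx3E (v : 'M[F]_3) : v = mk3 (v o0 o0) (v o0 o1) (v o0 o2) (v o1 o0) (v o1 o1) (v o1 o2)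
   (v o2 o0) (v o2 o1) (v o2 o2).
Proof.
apply/matrixP => i j; rewrite mxE.
by case: i => [[|[|[|i]]] Hi] //; case: j => [[|[|[|j]]] Hj] //=; congr (v _ _); apply: val_inj.
Qed.

Lemma det_mk2 a b c d : \det (mk2 a b c d) = a * d - b * c.
Proof.
rewrite (expand_det_row _ ord0) !big_ord_recl big_ord0 /cofactor !det_mx11 !mxE /=.
ring.
Qed.

Lemma det_mk3 a b c d e f g h k : \det (mk3 a b c d e f g h k) =
  a * (e * k - f * h) - b * (d * k - f * g) + c * (d * h - e * g).
Proof.
rewrite (expand_det_row _ ord0) !big_ord_recl big_ord0 /cofactor.
rewrite !(expand_det_row _ ord0) !big_ord_recl !big_ord0 /cofactor !det_mx11 !mxE /=.
ring.
Qed.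

Definition inv2 (g : 'M[F]_2) := mk2 (g idx1 idx1) (- g idx0 idx1) (- g idx1 idx0) (g idx0 idx0).
Definition uv (g : 'M[F]_2) := mkc3 (g idx1 idx0) (g idx1 idx1 - g idx0 idx0) (- g idx0 idx1).
Definition K1 : 'M[F]_3 := mk3 0 0 (-2) 0 1 0 (-2) 0 0.
Definition K2' : 'M[F]_3 := mk3 0 0 (-1) 0 2 0 (-1) 0 0.
Definition bil (x y : 'cV[F]_3) : F := (x^T *m K1 *m y) ord0 ord0.

Lemma sym2M (g h : 'M[F]_2) : sym2 (g *m h) = sym2 g *m sym2 h.
Proof. gen2 g => a b c d; gen2 h => e f g' h'; rewrite /sym2; ent; ring. Qed.

Lemma sym2_1 : sym2 (1%:M : 'M[F]_2) = 1%:M.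
Proof. rewrite /sym2; ent; ring. Qed.


Lemma trE (g : 'M[F]_2) : \tr g = g idx0 idx0 + g idx1 idx1.
Proof. by rewrite /mxtrace !big_ord_recl big_ord0 addr0; congr (_ + g _ _ ); apply: val_inj. Qed.

Lemma detE (g : 'M[F]_2) : \det g = g idx0 idx0 * g idx1 idx1 - g idx0 idx1 * g idx1 idx0.
Proof. by rewrite {1}[g]mx2E det_mk2. Qed.

Lemma sym2_form1 (g : 'M[F]_2) : sym2 g *m K1 *m (sym2 g)^T = (\det g)^+2 *: K1.
Proof. rewrite detE; gen2 g => a b c d; rewrite /sym2 /K1; ent; ring. Qed.

Lemma sym2_form2 (g : 'M[F]_2) : (sym2 g)^T *m K2' *m sym2 g = (\det g)^+2 *: K2'.
Proof. rewrite detE; gen2 g => a b c d; rewrite /sym2 /K2'; ent; ring. Qed.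

Lemma mul_inv2 (g : 'M[F]_2) : g *m inv2 g = (\det g)%:M.
Proof. rewrite detE /inv2; gen2 g => a b c d; ent2; ring. Qed.

Lemma inv2_mul (g : 'M[F]_2) : inv2 g *m g = (\det g)%:M.
Proof. rewrite detE /inv2; gen2 g => a b c d; ent2; ring. Qed.

Lemma inv2AB_A (g h : 'M[F]_2) : inv2 (g *m h) *m g = \det g *: inv2 h.
Proof. rewrite detE /inv2; gen2 g => a b c d; gen2 h => e f g' h'.
  ent2; ring. Qed.

Lemma ad_sum (g : 'M[F]_2) : (sym2 g)^T + (sym2 (inv2 g))^T =
  (\tr g ^+ 2 - 2 * \det g)%:M - uv g *m (uv g)^T *m K1.
Proof. rewrite trE detE /inv2 /uv; gen2 g => a b c d; rewrite /sym2 /K1; ent; ring. Qed.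

Lemma ker_id (g : 'M[F]_2) :
  let X := (sym2 g)^T - (\det g)%:M in let s := \tr g ^+ 2 - 4%:R * \det g in
  (s * \det g)%:M - \det g *: (uv g *m (uv g)^T *m K1) = (X - s%:M) *m X.
Proof. rewrite /= trE detE /uv; gen2 g => a b c d; rewrite /sym2 /K1; ent; ring. Qed.

Lemma bil_uv (g h : 'M[F]_2) : bil (uv g) (uv h) = 2 * \tr (g *m h) - \tr g * \tr h.
Proof.
rewrite !trE /bil /uv /K1; gen2 g => a b c d; gen2 h => e f g' h'.
expand; ring.
Qed.

Lemma tr_A_invAB (g h : 'M[F]_2) : \tr (g *m inv2 (g *m h)) = \det g * \tr h.
Proof.
rewrite !trE detE /inv2; gen2 g => a b c d; gen2 h => e f g' h'.
expand; ring.
Qed.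

Lemma tr_B_invAB (g h : 'M[F]_2) : \tr (h *m inv2 (g *m h)) = \det h * \tr g.
Proof.
rewrite !trE detE /inv2; gen2 g => a b c d; gen2 h => e f g' h'.
expand; ring.
Qed.

Lemma tr_inv2 (g : 'M[F]_2) : \tr (inv2 g) = \tr g.
Proof. rewrite !trE /inv2; gen2 g => a b c d; rewrite !mxE /=; ring. Qed.

Lemma det_inv2 (g : 'M[F]_2) : \det (inv2 g) = \det g.
Proof. rewrite detE [in RHS]detE /inv2; gen2 g => a b c d; rewrite !mxE /=; ring. Qed.

Lemma disc_uv (g : 'M[F]_2) : bil (uv g) (uv g) = \tr g ^+ 2 - 4%:R * \det g.
Proof. rewrite bil_uv !trE detE; gen2 g => a b c d;
  expand; ring. Qed.

Lemma K1K2 : K1 *m K2' = 2%:R%:M.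
Proof. rewrite /K1 /K2'; ent; ring. Qed.

Lemma K2K1 : K2' *m K1 = 2%:R%:M.
Proof. rewrite /K1 /K2'; ent; ring. Qed.

Lemma K1_tr : K1^T = K1.
Proof. rewrite /K1; ent; ring. Qed.

Lemma det_K1 : \det K1 = - 4%:R.
Proof. rewrite /K1 det_mk3; ring. Qed.

Lemma det_K2' : \det K2' = - 2%:R.
Proof. rewrite /K2' det_mk3; ring. Qed.

End Core.

Arguments K1 {F}.
Arguments K2' {F}.



Section Core2.
Variable F : fieldType.

Definition cols3 (x y z : 'cV[F]_3) : 'M[F]_3 := \matrix_(i < 3, j < 3)
  match nat_of_ord j with 0 => x i ord0 | 1 => y i ord0 | _ => z i ord0 end.

Lemma cols3E (x y z : 'cV[F]_3) : row_mx (row_mx x y) z = cols3 x y z.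
Proof.
apply/matrixP => i j; rewrite !mxE; case: splitP => j1 Hj1.
  rewrite mxE; case: splitP => j2 Hj2.
    by rewrite Hj1 Hj2 (ord1 j2).
  by rewrite Hj1 Hj2 (ord1 j2).
by rewrite Hj1 (ord1 j1).
Qed.

Lemma gram3 (x y z : 'cV[F]_3) : (cols3 x y z)^T *m K1 *m cols3 x y z =
  mk3 (bil x x) (bil x y) (bil x z) (bil y x) (bil y y) (bil y z) (bil z x) (bil z y) (bil z z).
Proof.
rewrite /bil [x]mxc3E [y]mxc3E [z]mxc3E /K1.
move: (x o0 ord0) (x o1 ord0) (x o2 ord0) (y o0 ord0) (y o1 ord0) (y o2 ord0)
  (z o0 ord0) (z o1 ord0) (z o2 ord0) => x0 x1 x2 y0 y1 y2 z0 z1 z2.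
rewrite /cols3; ent; ring.
Qed.

Lemma add_mk3 a b c d e f g h k a' b' c' d' e' f' g' h' k' :
  mk3 a b c d e f g h k + mk3 a' b' c' d' e' f' g' h' k' =
  mk3 (a + a') (b + b') (c + c') (d + d') (e + e') (f + f') (g + g') (h + h') (k + k') :> 'M[F]_3.
Proof. by ent. Qed.

Lemma detW (c : F) (u1 u2 : 'cV[F]_3) :
  \det (c%:M + u1 *m u1^T *m K1 + u2 *m u2^T *m K1) =
  c * (c ^+ 2 + c * (bil u1 u1 + bil u2 u2) + bil u1 u1 * bil u2 u2 - bil u1 u2 ^+ 2).
Proof.
rewrite /bil [u1]mxc3E [u2]mxc3E /K1.
move: (u1 o0 ord0) (u1 o1 ord0) (u1 o2 ord0) (u2 o0 ord0) (u2 o1 ord0) (u2 o2 ord0)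
  => x0 x1 x2 y0 y1 y2.
rewrite [X in \det X]mx3E det_mk3; expand; ring.
Qed.

Lemma bilZl (a : F) (x y : 'cV[F]_3) : bil (a *: x) y = a * bil x y.
Proof. by rewrite /bil linearZ /= -!scalemxAl mxE. Qed.

Lemma bilZr (a : F) (x y : 'cV[F]_3) : bil x (a *: y) = a * bil x y.
Proof. by rewrite /bil -scalemxAr mxE. Qed.

Lemma bilNl (x y : 'cV[F]_3) : bil (- x) y = - bil x y.
Proof. by rewrite -scaleN1r bilZl mulN1r. Qed.

Lemma bilNr (x y : 'cV[F]_3) : bil x (- y) = - bil x y.
Proof. by rewrite -scaleN1r bilZr mulN1r. Qed.

Lemma bil0l (y : 'cV[F]_3) : bil 0 y = 0.
Proof. by rewrite /bil trmx0 !mul0mx mxE. Qed.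

Lemma bil0r (x : 'cV[F]_3) : bil x 0 = 0.
Proof. by rewrite /bil mulmx0 mxE. Qed.

Lemma bilC (x y : 'cV[F]_3) : bil x y = bil y x.
Proof.
rewrite /bil; transitivity ((y^T *m K1 *m x)^T ord0 ord0); last by rewrite mxE.
by rewrite !trmx_mul trmxK K1_tr mulmxA.
Qed.

Lemma bil_sym2 (g : 'M[F]_2) (x y : 'cV[F]_3) :
  bil ((sym2 g)^T *m x) ((sym2 g)^T *m y) = (\det g) ^+ 2 * bil x y.
Proof.
rewrite /bil trmx_mul trmxK -!mulmxA (mulmxA (sym2 g)) (mulmxA (sym2 g *m K1)) sym2_form1.
by rewrite -scalemxAl -scalemxAr mxE mulmxA.
Qed.

Ltac gen2 g := rewrite [g]mx2E;
  move: (g idx0 idx0) (g idx0 idx1) (g idx1 idx0) (g idx1 idx1).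

Lemma XK2X (g : 'M[F]_2) : ((sym2 g)^T - (\det g)%:M) *m K2' *m ((sym2 g)^T - (\det g)%:M)^T =
  K2' *m ((2%:R * \det g ^+ 2)%:M - \det g *: sym2 g - \det g *: sym2 (inv2 g)).
Proof. rewrite detE /inv2; gen2 g => a b c d; rewrite /sym2 /K2'; ent; ring. Qed.

Lemma combW (x1 x2 : F) (U1 U2 : 'M[F]_3) :
  (2%:R%:M - (x1%:M - U1)) + (2%:R%:M - (x2%:M - U2)) = (4%:R - x1 - x2)%:M + U1 + U2.
Proof. apply/matrixP => i j; rewrite !mxE; case: (i == j) => /=; ring. Qed.

Lemma invmx_inv2 (g : 'M[F]_2) : \det g = 1 -> invmx g = inv2 g.
Proof.
move=> dg; have U : g \in unitmx by rewrite unitmxE dg unitr1.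
by rewrite -[RHS]mul1mx -(mulVmx U) -mulmxA mul_inv2 dg mulmx1.
Qed.

End Core2.

Section Main.
Variable F : fieldType.

Lemma inv_repr (g : 'M[F]_2) (I : 'cV[F]_3) : \det g = 1 ->
  \tr g ^+ 2 - 4%:R != 0 -> (sym2 g)^T *m I = I ->
  I = ((\tr g ^+ 2 - 4%:R)^-1 * bil (uv g) I) *: uv g.
Proof.
move=> dg sne hI; have := ker_id g; rewrite /= dg mulr1 scale1r.
set s := (\tr g ^+ 2 - 4%:R); set X := ((sym2 g)^T - 1%:M) => E.
have XI : X *m I = 0 by rewrite /X mulmxBl mul1mx hI subrr.
have R : (X - s%:M) *m X *m I = 0 by rewrite -mulmxA XI mulmx0.
rewrite -E mulmxBl mul_scalar_mx in R; move: R.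
rewrite -!mulmxA [_^T *m _]mx11_scalar mul_mx_scalar => /eqP; rewrite subr_eq0 => /eqP E2.
rewrite -scalerA /bil -mulmxA -E2 scalerA mulr1 mulVf ?scale1r //.
Qed.


Lemma rc_swap m1 m2 n1 n2 (a : 'M[F]_(m1, n1)) (b : 'M[F]_(m2, n1)) (c : 'M[F]_(m1, n2)) (d : 'M[F]_(m2, n2)) :
  row_mx (col_mx a b) (col_mx c d) = col_mx (row_mx a c) (row_mx b d).
Proof. by rewrite -block_mxEh block_mxEv. Qed.

Lemma two_pow_ne0 (k : nat) : (2%:R : F) != 0 -> (2%:R ^+ k : F) != 0.
Proof. by move=> h; rewrite expf_neq0. Qed.

Lemma alg_final (t1 t2 t3 l1 l2 l3 n r e : F) : (2%:R : F) != 0 ->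
  t1 ^+ 2 - 4%:R != 0 -> t2 ^+ 2 - 4%:R != 0 -> t3 ^+ 2 - 4%:R != 0 ->
  8%:R - t1 ^+ 2 - t2 ^+ 2 != 0 ->
  (t1 ^+ 2 - 4%:R) * (t2 ^+ 2 - 4%:R) - (2%:R * t3 - t1 * t2) ^+ 2 != 0 ->
  e != 0 ->
  l1 ^+ 2 * (t1 ^+ 2 - 4%:R) = 1 -> l2 ^+ 2 * (t2 ^+ 2 - 4%:R) = 1 -> l3 ^+ 2 * (t3 ^+ 2 - 4%:R) = 1 ->
  let c := 4%:R - (t1 ^+ 2 - 2%:R) - (t2 ^+ 2 - 2%:R) in
  let g := 2%:R - (l1 * l3 * (2%:R * t2 - t1 * t3)) ^+ 2 - (l2 * l3 * (2%:R * t1 - t2 * t3)) ^+ 2 in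
  16%:R * n * n = 2%:R ^+ 3 * (- 2%:R * (c * (c ^+ 2 + c * (t1 ^+ 2 - 4%:R + (t2 ^+ 2 - 4%:R))
     + (t1 ^+ 2 - 4%:R) * (t2 ^+ 2 - 4%:R) - (2%:R * t3 - t1 * t2) ^+ 2))) * g ->
  16%:R * n * r = 2%:R ^+ 3 * e * g ->
  (r / e) ^+ 2 = (4%:R * (t1 ^+ 2 - 4%:R) * (t2 ^+ 2 - 4%:R) * (t3 ^+ 2 - 4%:R))^-1.
Proof.
move=> h2 s1 s2 s3 cn kn en q1 q2 q3 c g E1 E2.
set S1 := t1 ^+ 2 - 4%:R in s1 q1 kn E1 *; set S2 := t2 ^+ 2 - 4%:R in s2 q2 kn E1 *.
set S3 := t3 ^+ 2 - 4%:R in s3 q3 *.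
set K := S1 * S2 - (2%:R * t3 - t1 * t2) ^+ 2 in kn E1 *.
have cE : c = 8%:R - t1 ^+ 2 - t2 ^+ 2 by rewrite /c; ring.
have cn' : c != 0 by rewrite cE.
have gE : g * (S1 * S2 * S3) = - (c * K).
  transitivity (2%:R * S1 * S2 * S3 - (l1 ^+ 2 * S1) * (l3 ^+ 2 * S3) * (2%:R * t2 - t1 * t3) ^+ 2 * S2
     - (l2 ^+ 2 * S2) * (l3 ^+ 2 * S3) * (2%:R * t1 - t2 * t3) ^+ 2 * S1).
    by rewrite /g; ring.
  by rewrite q1 q2 q3 /c /K /S1 /S2 /S3; ring.
have cK : c * K != 0 by rewrite mulf_neq0.
have gn : g != 0.
  apply: contraNneq cK => g0; apply/eqP.
  by rewrite -[c * K]opprK -gE g0 mul0r oppr0.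
have KE : c ^+ 2 + c * (S1 + S2) + S1 * S2 - (2%:R * t3 - t1 * t2) ^+ 2 = K.
  by rewrite /c /K /S1 /S2; ring.
rewrite KE in E1.
have h16 : (16%:R : F) != 0.
  by rewrite (_ : 16%:R = 2%:R ^+ 4) ?two_pow_ne0 // -natrX.
have h4 : (4%:R : F) != 0.
  by rewrite (_ : 4%:R = 2%:R ^+ 2) ?two_pow_ne0 // -natrX.
have h256 : (256%:R : F) != 0.
  by rewrite (_ : 256%:R = 2%:R ^+ 8) ?two_pow_ne0 // -natrX.
have h8 : (8%:R : F) != 0.
  by rewrite (_ : 8%:R = 2%:R ^+ 3) ?two_pow_ne0 // -natrX.
have nn : n != 0.
  apply/eqP => n0; move: E1; rewrite n0 !mulr0 => /eqP; rewrite eq_sym.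
  by rewrite !mulf_eq0 oppr_eq0 (negPf cn') (negPf kn) (negPf gn) (negPf h2).
have rE : r = (16%:R * n * r) / (16%:R * n).
  by field; rewrite nn h16.
rewrite E2 in rE; rewrite rE.
have nsq : n ^+ 2 = 2%:R ^+ 3 * (- 2%:R * (c * K)) * g / 16%:R.
  by rewrite -E1; field; rewrite h16.
have gE' : g = - (c * K) / (S1 * S2 * S3).
  by rewrite -gE; field; rewrite s1 s2 s3.
rewrite (_ : (2%:R ^+ 3 * e * g / (16%:R * n) / e) ^+ 2 = (2%:R ^+ 3 * g) ^+ 2 / (16%:R ^+ 2 * n ^+ 2)); last first.
  by field; rewrite nn h256 en h16.
rewrite nsq gE'.
by field; rewrite s3 s2 s1 h4 h16 !oppr_eq0 cK kn cn' h2 h8 h256.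
Qed.

Lemma alg_g (t1 t2 t3 l1 l2 l3 : F) :
  t1 ^+ 2 - 4%:R != 0 -> t2 ^+ 2 - 4%:R != 0 -> t3 ^+ 2 - 4%:R != 0 ->
  8%:R - t1 ^+ 2 - t2 ^+ 2 != 0 ->
  (t1 ^+ 2 - 4%:R) * (t2 ^+ 2 - 4%:R) - (2%:R * t3 - t1 * t2) ^+ 2 != 0 ->
  l1 ^+ 2 * (t1 ^+ 2 - 4%:R) = 1 -> l2 ^+ 2 * (t2 ^+ 2 - 4%:R) = 1 -> l3 ^+ 2 * (t3 ^+ 2 - 4%:R) = 1 ->
  2%:R - (l1 * l3 * (2%:R * t2 - t1 * t3)) ^+ 2 - (l2 * l3 * (2%:R * t1 - t2 * t3)) ^+ 2 != 0.
Proof.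
move=> s1 s2 s3 cn kn q1 q2 q3.
set S1 := t1 ^+ 2 - 4%:R in s1 q1 kn *; set S2 := t2 ^+ 2 - 4%:R in s2 q2 kn *.
set S3 := t3 ^+ 2 - 4%:R in s3 q3 *.
set K := S1 * S2 - (2%:R * t3 - t1 * t2) ^+ 2 in kn *.
set g := 2%:R - _ - _.
have gE : g * (S1 * S2 * S3) = - ((8%:R - t1 ^+ 2 - t2 ^+ 2) * K).
  transitivity (2%:R * S1 * S2 * S3 - (l1 ^+ 2 * S1) * (l3 ^+ 2 * S3) * (2%:R * t2 - t1 * t3) ^+ 2 * S2
     - (l2 ^+ 2 * S2) * (l3 ^+ 2 * S3) * (2%:R * t1 - t2 * t3) ^+ 2 * S1).
    by rewrite /g; ring.
  by rewrite q1 q2 q3 /K /S1 /S2 /S3; ring.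
have cK : (8%:R - t1 ^+ 2 - t2 ^+ 2) * K != 0 by rewrite mulf_neq0.
apply: contraNneq cK => g0; apply/eqP.
by rewrite -[_ * K]opprK -gE g0 mul0r oppr0.
Qed.

Lemma alg_d (t1 t2 t3 : F) : (2%:R : F) != 0 ->
  8%:R - t1 ^+ 2 - t2 ^+ 2 != 0 ->
  (t1 ^+ 2 - 4%:R) * (t2 ^+ 2 - 4%:R) - (2%:R * t3 - t1 * t2) ^+ 2 != 0 ->
  let c := 4%:R - (t1 ^+ 2 - 2%:R) - (t2 ^+ 2 - 2%:R) in
  - 2%:R * (c * (c ^+ 2 + c * (t1 ^+ 2 - 4%:R + (t2 ^+ 2 - 4%:R))
     + (t1 ^+ 2 - 4%:R) * (t2 ^+ 2 - 4%:R) - (2%:R * t3 - t1 * t2) ^+ 2)) != 0.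
Proof.
move=> h2 cn kn /=; set c := (4%:R - (t1 ^+ 2 - 2%:R) - (t2 ^+ 2 - 2%:R)).
have -> : c ^+ 2 + c * (t1 ^+ 2 - 4%:R + (t2 ^+ 2 - 4%:R))
     + (t1 ^+ 2 - 4%:R) * (t2 ^+ 2 - 4%:R) - (2%:R * t3 - t1 * t2) ^+ 2 =
   (t1 ^+ 2 - 4%:R) * (t2 ^+ 2 - 4%:R) - (2%:R * t3 - t1 * t2) ^+ 2 by rewrite /c; ring.
have -> : c = 8%:R - t1 ^+ 2 - t2 ^+ 2 by rewrite /c; ring.
by rewrite !mulf_neq0 // oppr_eq0.
Qed.

Section Setup.
Variables (A B : 'M[F]_2) (I1 I2 I3 : 'cV[F]_3).
Hypothesis dA : \det A = 1.
Hypothesis dB : \det B = 1.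
Local Notation C := (inv2 (A *m B)).
Hypothesis hI1 : (sym2 A)^T *m I1 = I1.
Hypothesis hI2 : (sym2 B)^T *m I2 = I2.
Hypothesis hI3 : (sym2 C)^T *m I3 = I3.
Hypothesis nI1 : bil I1 I1 = 1.
Hypothesis nI2 : bil I2 I2 = 1.
Hypothesis nI3 : bil I3 I3 = 1.

Definition Dm := row_mx ((sym2 A)^T - 1%:M) ((sym2 B)^T - 1%:M).
Definition Hm := row_mx (row_mx (col_mx I1 0) (col_mx 0 I2))
  (- col_mx ((sym2 C)^T *m I3) ((sym2 (inv2 B))^T *m I3)).

Lemma detC : \det C = 1.
Proof. by rewrite det_inv2 det_mulmx dA dB mulr1. Qed.

Lemma qI3 : (sym2 B)^T *m ((sym2 (inv2 B))^T *m I3) = I3.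
Proof. by rewrite mulmxA -trmx_mul -sym2M inv2_mul dB sym2_1 trmx1 mul1mx. Qed.

Lemma AI3 : (sym2 A)^T *m I3 = (sym2 (inv2 B))^T *m I3.
Proof. by rewrite -{1}hI3 mulmxA -trmx_mul -sym2M inv2AB_A dA scale1r. Qed.

Lemma DH0 : Dm *m Hm = 0.
Proof.
rewrite /Dm /Hm !mul_mx_row mulmxN !mul_row_col !mulmx0 addr0 add0r hI3.
rewrite !mulmxBl !mul1mx hI1 hI2 AI3 qI3 !subrr addrA subrK subrr oppr0.
by rewrite !row_mx0.
Qed.

Lemma Hm_col : Hm = col_mx (cols3 I1 0 (- I3)) (cols3 0 I2 (- ((sym2 (inv2 B))^T *m I3))).
Proof. by rewrite /Hm hI3 opp_col_mx !rc_swap !cols3E. Qed.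

Definition G1 : 'M[F]_(3 + 3) := block_mx K1 0 0 K1.
Definition G2 : 'M[F]_(3 + 3) := block_mx K2' 0 0 K2'.

Lemma bil2q : bil I2 ((sym2 (inv2 B))^T *m I3) = bil I2 I3.
Proof. by rewrite -{2}hI2 -{2}qI3 bil_sym2 dB expr1n mul1r. Qed.

Lemma bilqq : bil ((sym2 (inv2 B))^T *m I3) ((sym2 (inv2 B))^T *m I3) = 1.
Proof. by rewrite bil_sym2 det_inv2 dB expr1n mul1r. Qed.

Lemma gram : Hm^T *m G1 *m Hm =
  mk3 1 0 (- bil I1 I3) 0 1 (- bil I2 I3) (- bil I1 I3) (- bil I2 I3) 2%:R.
Proof.
rewrite Hm_col tr_col_mx /G1 mul_row_block !mulmx0 addr0 add0r mul_row_col !gram3 add_mk3.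
rewrite !bil0l !bil0r !bilNl !bilNr !opprK nI1 nI2 nI3 bilqq bil2q (bilC I3 I1) (bilC _ I2) bil2q.
congr mk3; ring.
Qed.

Lemma DGD : Dm *m G2 *m Dm^T =
  K2' *m ((2%:R%:M - sym2 A - sym2 (inv2 A)) + (2%:R%:M - sym2 B - sym2 (inv2 B))).
Proof.
rewrite /Dm /G2 mul_row_block !mulmx0 addr0 add0r tr_row_mx mul_row_col mulmxDr.
have hA := XK2X A; have hB := XK2X B.
rewrite dA expr1n mulr1 !scale1r in hA; rewrite dB expr1n mulr1 !scale1r in hB.
by rewrite hA hB.
Qed.

Lemma detDGD : let c := 4%:R - (\tr A ^+ 2 - 2%:R) - (\tr B ^+ 2 - 2%:R) in
  \det (Dm *m G2 *m Dm^T) = - 2%:R * (c * (c ^+ 2 + c * (bil (uv A) (uv A) + bil (uv B) (uv B))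
     + bil (uv A) (uv A) * bil (uv B) (uv B) - bil (uv A) (uv B) ^+ 2)).
Proof.
move=> c; rewrite DGD det_mulmx det_K2'; congr (_ * _).
rewrite -det_tr.
have -> : ((2%:R%:M - sym2 A - sym2 (inv2 A)) + (2%:R%:M - sym2 B - sym2 (inv2 B)))^T =
  (2%:R%:M - ((sym2 A)^T + (sym2 (inv2 A))^T)) + (2%:R%:M - ((sym2 B)^T + (sym2 (inv2 B))^T)).
  by rewrite !raddfD !raddfN /= !trmx1 !addrA.
rewrite !ad_sum dA dB mulr1 combW -/c.
by rewrite detW.
Qed.

Lemma bil_uu (g : 'M[F]_2) : \det g = 1 -> bil (uv g) (uv g) = \tr g ^+ 2 - 4%:R.
Proof. by move=> dg; rewrite disc_uv dg mulr1. Qed.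

Section Key.
Hypothesis two_ne0 : (2%:R : F) != 0.
Hypothesis s1n : \tr A ^+ 2 - 4%:R != 0.
Hypothesis s2n : \tr B ^+ 2 - 4%:R != 0.
Hypothesis s3n : \tr (A *m B) ^+ 2 - 4%:R != 0.
Hypothesis cn : 8%:R - \tr A ^+ 2 - \tr B ^+ 2 != 0.
Hypothesis kn : (\tr A ^+ 2 - 4%:R) * (\tr B ^+ 2 - 4%:R) - (2%:R * \tr (A *m B) - \tr A * \tr B) ^+ 2 != 0.

Let l1 := (\tr A ^+ 2 - 4%:R)^-1 * bil (uv A) I1.
Let l2 := (\tr B ^+ 2 - 4%:R)^-1 * bil (uv B) I2.
Let l3 := (\tr C ^+ 2 - 4%:R)^-1 * bil (uv C) I3.

Lemma trC : \tr C = \tr (A *m B).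
Proof. by rewrite tr_inv2. Qed.

Lemma I1E : I1 = l1 *: uv A. Proof. exact: inv_repr. Qed.
Lemma I2E : I2 = l2 *: uv B. Proof. exact: inv_repr. Qed.
Lemma I3E : I3 = l3 *: uv C.
Proof.
have := @inv_repr C I3 detC; rewrite trC => /(_ s3n hI3).
by rewrite /l3 trC.
Qed.

Lemma l1sq : l1 ^+ 2 * (\tr A ^+ 2 - 4%:R) = 1.
Proof. have := nI1; rewrite {1 2}I1E bilZl bilZr bil_uu // => H; rewrite -[X in _ = X]H; by rewrite expr2 mulrA. Qed.
Lemma l2sq : l2 ^+ 2 * (\tr B ^+ 2 - 4%:R) = 1.
Proof. have := nI2; rewrite {1 2}I2E bilZl bilZr bil_uu // => H; rewrite -[X in _ = X]H; by rewrite expr2 mulrA. Qed.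
Lemma l3sq : l3 ^+ 2 * (\tr (A *m B) ^+ 2 - 4%:R) = 1.
Proof. have := nI3; rewrite {1 2}I3E bilZl bilZr bil_uu ?detC // trC => H; rewrite -[X in _ = X]H; by rewrite expr2 mulrA. Qed.

Lemma b13 : bil I1 I3 = l1 * l3 * (2%:R * \tr B - \tr A * \tr (A *m B)).
Proof. by rewrite {1}I1E {1}I3E bilZl bilZr bil_uv tr_A_invAB dA mul1r trC mulrA. Qed.
Lemma b23 : bil I2 I3 = l2 * l3 * (2%:R * \tr A - \tr B * \tr (A *m B)).
Proof. by rewrite {1}I2E {1}I3E bilZl bilZr bil_uv tr_B_invAB dB mul1r trC mulrA. Qed.

Lemma G1G2 : G1 *m G2 = 2%:R%:M.
Proof.
by rewrite /G1 /G2 mulmx_block !mulmx0 !mul0mx !addr0 !add0r K1K2 -scalar_mx_block.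
Qed.

Lemma G1T : G1^T = G1.
Proof. by rewrite /G1 tr_block_mx K1_tr !trmx0. Qed.

Lemma detG1 : \det G1 = 16%:R.
Proof. by rewrite /G1 det_ublock det_K1 mulrNN -natrM. Qed.

Lemma gramdet : \det (Hm^T *m G1 *m Hm) = 2%:R - bil I1 I3 ^+ 2 - bil I2 I3 ^+ 2.
Proof. rewrite gram det_mk3; ring. Qed.

Lemma key (L : 'M[F]_(3 + 3, 3)) : \det (Dm *m L) != 0 ->
  (\det (row_mx L Hm) / \det (Dm *m L)) ^+ 2 =
  (4%:R * (\tr A ^+ 2 - 4%:R) * (\tr B ^+ 2 - 4%:R) * (\tr (A *m B) ^+ 2 - 4%:R))^-1.
Proof.
move=> eL.
set N := row_mx (G2 *m Dm^T) Hm.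
set M := col_mx (2%:R *: Dm) (Hm^T *m G1).
have EM : M = (G1 *m N)^T.
  by rewrite /M /N mul_mx_row mulmxA G1G2 tr_row_mx !trmx_mul trmxK tr_scalar_mx mul_mx_scalar G1T.
have detM : \det M = \det G1 * \det N by rewrite EM det_tr det_mulmx.
have MN : M *m N = block_mx (2%:R *: (Dm *m G2 *m Dm^T)) 0 (Hm^T *m G1 *m (G2 *m Dm^T)) (Hm^T *m G1 *m Hm).
  have e1 : (2%:R *: Dm) *m N = row_mx ((2%:R *: Dm) *m (G2 *m Dm^T)) ((2%:R *: Dm) *m Hm).
    exact: mul_mx_row.
  have e2 : (Hm^T *m G1) *m N = row_mx ((Hm^T *m G1) *m (G2 *m Dm^T)) ((Hm^T *m G1) *m Hm).
    exact: mul_mx_row.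
  by rewrite /M mul_col_mx e1 e2 -!scalemxAl DH0 scaler0 block_mxEv !mulmxA.
have ML : M *m row_mx L Hm = block_mx (2%:R *: (Dm *m L)) 0 (Hm^T *m G1 *m L) (Hm^T *m G1 *m Hm).
  have e1 : (2%:R *: Dm) *m row_mx L Hm = row_mx ((2%:R *: Dm) *m L) ((2%:R *: Dm) *m Hm).
    exact: mul_mx_row.
  have e2 : (Hm^T *m G1) *m row_mx L Hm = row_mx ((Hm^T *m G1) *m L) ((Hm^T *m G1) *m Hm).
    exact: mul_mx_row.
  by rewrite /M mul_col_mx e1 e2 -!scalemxAl DH0 scaler0 block_mxEv.
have dMN := congr1 determinant MN; rewrite det_mulmx det_lblock detZ in dMN.
have dML := congr1 determinant ML; rewrite det_mulmx det_lblock detZ in dML.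
rewrite detM detG1 in dMN dML.
rewrite gramdet b13 b23 in dMN dML.
rewrite detDGD /= bil_uu // bil_uu // bil_uv in dMN.
move: dMN dML.
exact: (alg_final two_ne0 s1n s2n s3n cn kn eL l1sq l2sq l3sq).
Qed.

Lemma rankD : \rank Dm = 3.
Proof.
have U : Dm *m G2 *m Dm^T \in unitmx.
  rewrite unitmxE unitfE detDGD /= bil_uu // bil_uu // bil_uv.
  exact: alg_d.
apply/eqP; rewrite eqn_leq rank_leq_row /=.
apply: leq_trans (mxrankM_maxl Dm (G2 *m Dm^T)).
by rewrite mulmxA (mxrank_unit U).
Qed.

Lemma rankH : \rank Hm^T = 3.
Proof.
have U : Hm^T *m G1 *m Hm \in unitmx.
  rewrite unitmxE unitfE gramdet b13 b23.
  exact: (alg_g s1n s2n s3n cn kn l1sq l2sq l3sq).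
apply/eqP; rewrite eqn_leq rank_leq_row /=.
apply: leq_trans (mxrankM_maxl Hm^T (G1 *m Hm)).
by rewrite mulmxA (mxrank_unit U).
Qed.

End Key.

End Setup.
End Main.

Section All.
Variable F : fieldType.
Lemma core_all (A B : 'M[F]_2) (I1 I2 I3 : 'cV[F]_3) :
  \det A = 1 -> \det B = 1 ->
  (sym2 A)^T *m I1 = I1 -> (sym2 B)^T *m I2 = I2 -> (sym2 (inv2 (A *m B)))^T *m I3 = I3 ->
  bil I1 I1 = 1 -> bil I2 I2 = 1 -> bil I3 I3 = 1 ->
  (2%:R : F) != 0 ->
  \tr A ^+ 2 - 4%:R != 0 -> \tr B ^+ 2 - 4%:R != 0 -> \tr (A *m B) ^+ 2 - 4%:R != 0 ->
  8%:R - \tr A ^+ 2 - \tr B ^+ 2 != 0 ->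
  (\tr A ^+ 2 - 4%:R) * (\tr B ^+ 2 - 4%:R) - (2%:R * \tr (A *m B) - \tr A * \tr B) ^+ 2 != 0 ->
  [/\ \rank (Dm A B) = 3,
     [/\ \rank (kermx (Dm A B)^T) = 3, ((Hm A B I1 I2 I3)^T == kermx (Dm A B)^T)%MS
       & row_free (Hm A B I1 I2 I3)^T] &
     forall L : 'M[F]_(3 + 3, 3), (Dm A B *m L) \in unitmx ->
       (\det (row_mx L (Hm A B I1 I2 I3)) / \det (Dm A B *m L)) ^+ 2 =
       (4%:R * (\tr A ^+ 2 - 4%:R) * (\tr B ^+ 2 - 4%:R) * (\tr (A *m B) ^+ 2 - 4%:R))^-1].
Proof.
move=> dA dB hI1 hI2 hI3 nI1 nI2 nI3 h2 s1 s2 s3 cn kn.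
have rD := rankD dA dB h2 cn kn.
have rH := rankH dA dB hI1 hI2 hI3 nI1 nI2 nI3 s1 s2 s3 cn kn.
have rK : \rank (kermx (Dm A B)^T) = 3 by rewrite mxrank_ker mxrank_tr rD.
have sub : ((Hm A B I1 I2 I3)^T <= kermx (Dm A B)^T)%MS.
  by apply/sub_kermxP; rewrite -trmx_mul (DH0 dA dB hI1 hI2 hI3) trmx0.
split => //.
  split => //; last by rewrite /row_free rH.
  by rewrite -(mxrank_leqif_eq sub).2 rH rK.
move=> L; rewrite unitmxE unitfE => eL.
exact: (key dA dB hI1 hI2 hI3 nI1 nI2 nI3 h2 s1 s2 s3 cn kn eL).
Qed.
End All.

Section RealFacts.
Variable R : realType.

Lemma cos_pi_sub (a : R) : cos (pi - a) = - cos a.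
Proof. by rewrite cosB cospi sinpi mul0r addr0 mulN1r. Qed.

Lemma cone_X (a1 a2 a3 : R) : 0 < a1 -> 0 < a2 -> 0 < a3 -> a1 + a2 + a3 < pi ->
  0 < cos a3 + (cos a1 * cos a2 - sin a1 * sin a2).
Proof.
move=> h1 h2 h3 hs; rewrite -cosD.
have m1 : pi - a3 \in `[0, pi] by rewrite in_itv /=; apply/andP; split; lra.
have m2 : a1 + a2 \in `[0, pi] by rewrite in_itv /=; apply/andP; split; lra.
have : cos (pi - a3) < cos (a1 + a2) by rewrite (ltr_cos m2 m1); lra.
by rewrite cos_pi_sub; lra.
Qed.

Lemma cone_kn (a1 a2 a3 : R) : 0 < a1 -> 0 < a2 -> 0 < a3 -> a1 < pi -> a2 < pi ->
  a1 + a2 + a3 < pi ->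
  ((2 * cos a1) ^+ 2 - 4%:R) * ((2 * cos a2) ^+ 2 - 4%:R)
    - (2%:R * (- (2 * cos a3)) - (2 * cos a1) * (2 * cos a2)) ^+ 2 != 0.
Proof.
move=> h1 h2 h3 p1 p2 hs.
have X0 := cone_X h1 h2 h3 hs.
have s1 : 0 < sin a1 by apply: sin_gt0_pi; rewrite h1 p1.
have s2 : 0 < sin a2 by apply: sin_gt0_pi; rewrite h2 p2.
set X := cos a3 + _ in X0.
have E1 : cos a1 ^+ 2 + sin a1 ^+ 2 - 1 = 0 by rewrite cos2Dsin2 subrr.
have E2 : cos a2 ^+ 2 + sin a2 ^+ 2 - 1 = 0 by rewrite cos2Dsin2 subrr.
have -> : ((2 * cos a1) ^+ 2 - 4%:R) * ((2 * cos a2) ^+ 2 - 4%:R)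
    - (2%:R * (- (2 * cos a3)) - (2 * cos a1) * (2 * cos a2)) ^+ 2 =
  - 16%:R * X * (X + 2 * (sin a1 * sin a2))
  + 16%:R * (- (sin a1 ^+ 2) * (cos a2 ^+ 2 + sin a2 ^+ 2 - 1)
     - sin a2 ^+ 2 * (cos a1 ^+ 2 + sin a1 ^+ 2 - 1)
     + (cos a1 ^+ 2 + sin a1 ^+ 2 - 1) * (cos a2 ^+ 2 + sin a2 ^+ 2 - 1)).
  by rewrite /X; ring.
rewrite E1 E2 !mulr0 ?subr0 ?addr0.
have Y0 : 0 < X + 2 * (sin a1 * sin a2) by apply: addr_gt0 => //; apply: mulr_gt0 => //; apply: mulr_gt0.
rewrite !mulr0 addr0.
by rewrite !mulf_neq0 ?oppr_eq0 ?pnatr_eq0 ?lt0r_neq0.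
Qed.

Lemma cone_s (a : R) : 0 < a -> a < pi -> (2 * cos a) ^+ 2 - 4%:R != 0.
Proof.
move=> h p; have s : 0 < sin a by apply: sin_gt0_pi; rewrite h p.
have -> : (2 * cos a) ^+ 2 - 4%:R = - 4%:R * sin a ^+ 2 by rewrite exprMn cos2sin2; ring.
by rewrite mulf_neq0 ?oppr_eq0 ?pnatr_eq0 ?expf_neq0 ?lt0r_neq0.
Qed.

Lemma cone_c (a1 a2 : R) : 0 < a1 -> a1 < pi -> 0 < a2 -> a2 < pi ->
  8%:R - (2 * cos a1) ^+ 2 - (2 * cos a2) ^+ 2 != 0.
Proof.
move=> h1 p1 h2 p2.
have s1 : 0 < sin a1 by apply: sin_gt0_pi; rewrite h1 p1.
have s2 : 0 < sin a2 by apply: sin_gt0_pi; rewrite h2 p2.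
have -> : 8%:R - (2 * cos a1) ^+ 2 - (2 * cos a2) ^+ 2 = 4%:R * (sin a1 ^+ 2 + sin a2 ^+ 2).
  by rewrite !exprMn !cos2sin2; ring.
apply: lt0r_neq0; apply: mulr_gt0; first by rewrite ltr0n.
by apply: addr_gt0; apply: exprn_gt0.
Qed.

Lemma cosh_sinh (l : R) : coshR l ^+ 2 = 1 + sinhR l ^+ 2.
Proof.
have e : expR l != 0 by rewrite lt0r_neq0 ?expR_gt0.
rewrite /coshR /sinhR expRN; field.
by rewrite e.
Qed.

Lemma cosh_gt1 (l : R) : 0 < l -> 1 < coshR l.
Proof.
move=> h; have e1 : 1 < expR l by rewrite expR_gt1.
have e : expR l != 0 by rewrite lt0r_neq0 ?expR_gt0.
have E : coshR l - 1 = (expR l - 1) ^+ 2 / (2 * expR l).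
  by rewrite /coshR expRN; field; rewrite e.
rewrite -subr_gt0 E; apply: divr_gt0; first by apply: exprn_gt0; rewrite subr_gt0.
by apply: mulr_gt0; rewrite ?ltr0n ?expR_gt0.
Qed.

Lemma sinh_gt0 (l : R) : 0 < l -> 0 < sinhR l.
Proof.
move=> h; have e1 : 1 < expR l by rewrite expR_gt1.
have e : expR l != 0 by rewrite lt0r_neq0 ?expR_gt0.
have E : sinhR l = (expR l ^+ 2 - 1) / (2 * expR l).
  by rewrite /sinhR expRN; field; rewrite e.
rewrite E; apply: divr_gt0; last by apply: mulr_gt0; rewrite ?ltr0n ?expR_gt0.
rewrite subr_gt0; apply: exprn_egt1 => //.
Qed.

Lemma pants_s (l : R) : 0 < l -> (2 * coshR l) ^+ 2 - 4%:R != 0.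
Proof.
move=> h; have s := sinh_gt0 h.
have -> : (2 * coshR l) ^+ 2 - 4%:R = 4%:R * sinhR l ^+ 2 by rewrite exprMn cosh_sinh; ring.
by rewrite mulf_neq0 ?pnatr_eq0 ?expf_neq0 ?lt0r_neq0.
Qed.

Lemma pants_c (l1 l2 : R) : 0 < l1 -> 0 < l2 ->
  8%:R - (2 * coshR l1) ^+ 2 - (2 * coshR l2) ^+ 2 != 0.
Proof.
move=> h1 h2; have s1 := sinh_gt0 h1; have s2 := sinh_gt0 h2.
have -> : 8%:R - (2 * coshR l1) ^+ 2 - (2 * coshR l2) ^+ 2 = - (4%:R * (sinhR l1 ^+ 2 + sinhR l2 ^+ 2)).
  by rewrite (exprMn 2 2 (coshR l1)) (exprMn 2 2 (coshR l2)) !cosh_sinh; ring.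
rewrite oppr_eq0; apply: lt0r_neq0; apply: mulr_gt0; first by rewrite ltr0n.
by apply: addr_gt0; apply: exprn_gt0.
Qed.

Lemma pants_kn (l1 l2 l3 : R) : 0 < l1 -> 0 < l2 -> 0 < l3 ->
  ((2 * coshR l1) ^+ 2 - 4%:R) * ((2 * coshR l2) ^+ 2 - 4%:R)
    - (2%:R * (- (2 * coshR l3)) - (2 * coshR l1) * (2 * coshR l2)) ^+ 2 != 0.
Proof.
move=> h1 h2 h3.
have c1 := cosh_gt1 h1; have c2 := cosh_gt1 h2; have c3 := cosh_gt1 h3.
have -> : ((2 * coshR l1) ^+ 2 - 4%:R) * ((2 * coshR l2) ^+ 2 - 4%:R)
    - (2%:R * (- (2 * coshR l3)) - (2 * coshR l1) * (2 * coshR l2)) ^+ 2 =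
  - (16%:R * ((coshR l1 ^+ 2 - 1) + coshR l2 ^+ 2 + coshR l3 ^+ 2
     + 2 * (coshR l1 * coshR l2 * coshR l3))) by ring.
have p1 : 0 < coshR l1 by lra.
have p2 : 0 < coshR l2 by lra.
have p3 : 0 < coshR l3 by lra.
rewrite oppr_eq0; apply: lt0r_neq0; apply: mulr_gt0; first by rewrite ltr0n.
apply: addr_gt0; last by apply: mulr_gt0 => //; apply: mulr_gt0 => //; apply: mulr_gt0.
apply: addr_gt0; last exact: exprn_gt0.
apply: addr_gt0; last exact: exprn_gt0.
by rewrite subr_gt0 exprn_egt1.
Qed.

End RealFacts.

Local Open Scope complex_scope.

Section Bridge.
Variable R : realType.
Local Notation C := (R[i]).
Local Notation f := (real_complex R).

Lemma Cnz (x : R) : x != 0 -> x%:C != 0.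
Proof. by apply: contra => /eqP h; apply/eqP; apply: complexI; rewrite h. Qed.

Lemma trCm (g : 'M[R]_2) : \tr (map_mx f g) = (\tr g)%:C.
Proof. by rewrite /mxtrace rmorph_sum; apply: eq_bigr => i _; rewrite mxE. Qed.

Lemma AdCE (g : 'M[R]_2) : AdC g = sym2 (map_mx f g).
Proof. by []. Qed.

Lemma disc_bilC (x : 'cV[C]_3) : disc x = bil x x.
Proof.
rewrite /disc /bil [x]mxc3E /K1; move: (x o0 ord0) (x o1 ord0) (x o2 ord0) => p q r.
rewrite !mxE !inordK //=; expand; ring.
Qed.

Lemma push_conds (x1 x2 x3 : R) :
  x1 ^+ 2 - 4%:R != 0 -> x2 ^+ 2 - 4%:R != 0 -> x3 ^+ 2 - 4%:R != 0 ->
  8%:R - x1 ^+ 2 - x2 ^+ 2 != 0 ->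
  (x1 ^+ 2 - 4%:R) * (x2 ^+ 2 - 4%:R) - (2%:R * x3 - x1 * x2) ^+ 2 != 0 ->
  [/\ x1%:C ^+ 2 - 4%:R != 0, x2%:C ^+ 2 - 4%:R != 0, x3%:C ^+ 2 - 4%:R != 0,
    8%:R - x1%:C ^+ 2 - x2%:C ^+ 2 != 0 &
    (x1%:C ^+ 2 - 4%:R) * (x2%:C ^+ 2 - 4%:R) - (2%:R * x3%:C - x1%:C * x2%:C) ^+ 2 != 0].
Proof.
move=> /Cnz h1 /Cnz h2 /Cnz h3 /Cnz h4 /Cnz h5.
have e1 : forall x : R, x%:C ^+ 2 - 4%:R = (x ^+ 2 - 4%:R)%:C.
  by move=> x; rewrite rmorphB rmorphXn rmorph_nat.
rewrite !e1; split => //.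
  have -> : 8%:R - x1%:C ^+ 2 - x2%:C ^+ 2 = (8%:R - x1 ^+ 2 - x2 ^+ 2)%:C.
    by rewrite !(rmorphB, rmorphXn, rmorphM, rmorph_nat).
  by [].
have -> : (x1 ^+ 2 - 4%:R)%:C * (x2 ^+ 2 - 4%:R)%:C - (2%:R * x3%:C - x1%:C * x2%:C) ^+ 2
  = ((x1 ^+ 2 - 4%:R) * (x2 ^+ 2 - 4%:R) - (2%:R * x3 - x1 * x2) ^+ 2)%:C.
  by rewrite !(rmorphB, rmorphXn, rmorphM, rmorph_nat).
by [].
Qed.

Lemma bridge (A B : 'M[R]_2) (I1 I2 I3 : 'cV[C]_3) :
  \det A = 1 -> \det B = 1 ->
  normalized_invariant A I1 -> normalized_invariant B I2 ->
  normalized_invariant (invmx (A *m B)) I3 ->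
  \tr A ^+ 2 - 4%:R != 0 -> \tr B ^+ 2 - 4%:R != 0 -> \tr (A *m B) ^+ 2 - 4%:R != 0 ->
  8%:R - \tr A ^+ 2 - \tr B ^+ 2 != 0 ->
  (\tr A ^+ 2 - 4%:R) * (\tr B ^+ 2 - 4%:R) - (2%:R * \tr (A *m B) - \tr A * \tr B) ^+ 2 != 0 ->
  [/\ H0_vanishes A B, H1_basis A B I1 I2 I3 &
     forall L : 'M[C]_(3 + 3, 3), (bd A B *m L) \in unitmx ->
       torsion (bd A B) (hP A B I1 I2 I3) L ^+ 2 =
       (4%:R * ((\tr A)%:C ^+ 2 - 4%:R) * ((\tr B)%:C ^+ 2 - 4%:R)
          * ((\tr (A *m B))%:C ^+ 2 - 4%:R))^-1].
Proof.
move=> dA dB [_ h1 n1] [_ h2 n2] [_ h3 n3] c1 c2 c3 c4 c5.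
have [k1 k2 k3 k4 k5] := push_conds c1 c2 c3 c4 c5.
have dA' : \det (map_mx f A) = 1 by rewrite det_map_mx dA rmorph1.
have dB' : \det (map_mx f B) = 1 by rewrite det_map_mx dB rmorph1.
have tA := trCm A; have tB := trCm B.
have tAB : \tr (map_mx f A *m map_mx f B) = (\tr (A *m B))%:C by rewrite -map_mxM trCm.
have eIAB : map_mx f (invmx (A *m B)) = inv2 (map_mx f A *m map_mx f B).
  by rewrite map_invmx map_mxM invmx_inv2 // det_mulmx dA' dB' mulr1.
have eIB : map_mx f (invmx B) = inv2 (map_mx f B) by rewrite map_invmx invmx_inv2.
have eHP : hP A B I1 I2 I3 = Hm (map_mx f A) (map_mx f B) I1 I2 I3.
  by rewrite /hP /Hm !AdCE eIAB eIB.
have eBd : bd A B = Dm (map_mx f A) (map_mx f B) by [].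
rewrite AdCE in h1; rewrite AdCE in h2; rewrite AdCE eIAB in h3.
rewrite disc_bilC in n1; rewrite disc_bilC in n2; rewrite disc_bilC in n3.
rewrite -tA -tB -tAB in k1 k2 k3 k4 k5.
have two : (2%:R : C) != 0 by rewrite pnatr_eq0.
have [r [rk e rf] key] := core_all dA' dB' h1 h2 h3 n1 n2 n3 two k1 k2 k3 k4 k5.
split.
- rewrite /H0_vanishes eBd. exact: r.
- rewrite /H1_basis /H1 eBd eHP. split. exact: rk. exact: e. exact: rf.
move=> L; rewrite /torsion eBd eHP => /key ->.
by rewrite tA tB tAB.
Qed.


End Bridge.

Lemma sq_pm (R : realType) (t v w : R[i]) : t ^+ 2 = w -> v ^+ 2 = w -> t = v \/ t = - v.
Proof.
move=> ht hv; have : t ^+ 2 == v ^+ 2 by rewrite ht hv.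
by rewrite eqf_sqr => /orP [/eqP|/eqP]; [left|right].
Qed.

Lemma cosC (R : realType) (a : R) :
  ((2 * cos a)%:C) ^+ 2 - 4%:R = - 4%:R * ((sin a)%:C) ^+ 2 :> R[i].
Proof.
have hc : ((cos a)%:C) ^+ 2 = 1 - ((sin a)%:C) ^+ 2 :> R[i].
  by rewrite -!rmorphXn cos2sin2 rmorphB rmorph1.
rewrite (rmorphM (real_complex R) 2 (cos a)) rmorph_nat exprMn hc; ring.
Qed.

Lemma coshC (R : realType) (l : R) :
  ((2 * coshR l)%:C) ^+ 2 - 4%:R = 4%:R * ((sinhR l)%:C) ^+ 2 :> R[i].
Proof.
have hc : ((coshR l)%:C) ^+ 2 = 1 + ((sinhR l)%:C) ^+ 2 :> R[i].
  by rewrite -!rmorphXn cosh_sinh rmorphD rmorph1.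
rewrite (rmorphM (real_complex R) 2 (coshR l)) rmorph_nat exprMn hc; ring.
Qed.

Unset Implicit Arguments.
Theorem proposition3p1 (R : realType) :
  (* case P_alpha: hyperbolic sphere with cone angles 2 a_k < 2 pi *)
  (forall (a1 a2 a3 : R) (A B : 'M[R]_2) (I1 I2 I3 : 'cV[R[i]]_3),
     0 < a1 -> 0 < a2 -> 0 < a3 -> a1 < pi -> a2 < pi -> a3 < pi ->
     a1 + a2 + a3 < pi ->
     cone_holonomy a1 a2 a3 A B ->
     normalized_invariant A I1 -> normalized_invariant B I2 ->
     normalized_invariant (invmx (A *m B)) I3 ->
     [/\ H0_vanishes A B,
         H1_basis A B I1 I2 I3 &
         forall L : 'M[R[i]]_(3 + 3, 3), (bd A B *m L) \in unitmx ->
           let t := torsion (bd A B) (hP A B I1 I2 I3) L in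
           let v := 'i / (16%:R * ((sin a1)%:C * (sin a2)%:C * (sin a3)%:C)) in
           t = v \/ t = - v])
  /\
  (* case P_l: hyperbolic pair of pants with geodesic boundary lengths 2 l_k *)
  (forall (l1 l2 l3 : R) (A B : 'M[R]_2) (I1 I2 I3 : 'cV[R[i]]_3),
     0 < l1 -> 0 < l2 -> 0 < l3 ->
     pants_holonomy l1 l2 l3 A B ->
     normalized_invariant A I1 -> normalized_invariant B I2 ->
     normalized_invariant (invmx (A *m B)) I3 ->
     [/\ H0_vanishes A B,
         H1_basis A B I1 I2 I3 &
         forall L : 'M[R[i]]_(3 + 3, 3), (bd A B *m L) \in unitmx ->
           let t := torsion (bd A B) (hP A B I1 I2 I3) L in
           let v := 1 / (16%:R * ((sinhR l1)%:C * (sinhR l2)%:C * (sinhR l3)%:C)) in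
           t = v \/ t = - v]).
Proof.
split.
- move=> a1 a2 a3 A B I1 I2 I3 h1 h2 h3 p1 p2 p3 hs [dA dB tA tB tAB] n1 n2 n3.
  have c1 : \tr A ^+ 2 - 4%:R != 0 by rewrite tA; exact: cone_s.
  have c2 : \tr B ^+ 2 - 4%:R != 0 by rewrite tB; exact: cone_s.
  have c3 : \tr (A *m B) ^+ 2 - 4%:R != 0 by rewrite tAB sqrrN; exact: cone_s.
  have c4 : 8%:R - \tr A ^+ 2 - \tr B ^+ 2 != 0 by rewrite tA tB; exact: cone_c.
  have c5 : (\tr A ^+ 2 - 4%:R) * (\tr B ^+ 2 - 4%:R)
     - (2%:R * \tr (A *m B) - \tr A * \tr B) ^+ 2 != 0 by rewrite tA tB tAB; exact: cone_kn.
  have [H0 H1 T] := bridge dA dB n1 n2 n3 c1 c2 c3 c4 c5.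
  split => // L U t v.
  have s1 : (sin a1)%:C != 0 by apply: Cnz; rewrite lt0r_neq0 // sin_gt0_pi // h1 p1.
  have s2 : (sin a2)%:C != 0 by apply: Cnz; rewrite lt0r_neq0 // sin_gt0_pi // h2 p2.
  have s3 : (sin a3)%:C != 0 by apply: Cnz; rewrite lt0r_neq0 // sin_gt0_pi // h3 p3.
  apply: (@sq_pm R t v _ (T L U)).
  rewrite tA tB tAB rmorphN sqrrN !cosC /v expr_div_n sqr_i.
  by field; apply/and3P; split.
- move=> l1 l2 l3 A B I1 I2 I3 h1 h2 h3 [dA dB tA tB tAB] n1 n2 n3.
  have c1 : \tr A ^+ 2 - 4%:R != 0 by rewrite tA; exact: pants_s.
  have c2 : \tr B ^+ 2 - 4%:R != 0 by rewrite tB; exact: pants_s.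
  have c3 : \tr (A *m B) ^+ 2 - 4%:R != 0 by rewrite tAB sqrrN; exact: pants_s.
  have c4 : 8%:R - \tr A ^+ 2 - \tr B ^+ 2 != 0 by rewrite tA tB; exact: pants_c.
  have c5 : (\tr A ^+ 2 - 4%:R) * (\tr B ^+ 2 - 4%:R)
     - (2%:R * \tr (A *m B) - \tr A * \tr B) ^+ 2 != 0 by rewrite tA tB tAB; exact: pants_kn.
  have [H0 H1 T] := bridge dA dB n1 n2 n3 c1 c2 c3 c4 c5.
  split => // L U t v.
  have s1 : (sinhR l1)%:C != 0 by apply: Cnz; rewrite lt0r_neq0 // sinh_gt0.
  have s2 : (sinhR l2)%:C != 0 by apply: Cnz; rewrite lt0r_neq0 // sinh_gt0.
  have s3 : (sinhR l3)%:C != 0 by apply: Cnz; rewrite lt0r_neq0 // sinh_gt0.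
  apply: (@sq_pm R t v _ (T L U)).
  rewrite tA tB tAB rmorphN sqrrN !coshC /v expr_div_n expr1n.
  by field; apply/and3P; split.
Qed.
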